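(* Let $S$ be a semigroup with a regular element $a$, and let $b\in S$ satisfy $a=aba$. Then for any set $U\subseteq S$ with $S=US^1$ we have $\mathbf{r}_S(a)=\langle\{(bau,u)\mid u\in U\}\rangle$. Consequently, $\mathbf{r}_S(a)$ is finitely generated if and only if $S=US^1$ for some finite set $U\subseteq S$.
   Context: $S^1$ is $S$ if $S$ is a monoid and otherwise $S$ with an identity adjoined. $\mathbf{r}_S(a)=\{(s,t)\in S\times S\mid as=at\}$. For $X\subseteq S\times S$, $\langle X\rangle$ denotes the smallest right congruence on $S$ containing $X$; a right congruence is finitely generated if it equals $\langle X\rangle$ for some finite $X$. *)

(* Defs.v *)
(* A semigroup is a carrier type S with an associative
   binary operation mul (associativity is a hypothesis of the theorem). *)
From Stdlib Require Import List.
Set Implicit Arguments.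

Section Semigroup.
Variable S : Type.
Variable mul : S -> S -> S.

Definition associative_op : Prop :=
  forall x y z, mul x (mul y z) = mul (mul x y) z.

Definition regular (a : S) : Prop := exists x, a = mul (mul a x) a.

Definition rann (a : S) (s t : S) : Prop := mul a s = mul a t.

Definition right_congruence (R : S -> S -> Prop) : Prop :=
  (forall s, R s s) /\
  (forall s t, R s t -> R t s) /\
  (forall s t u, R s t -> R t u -> R s u) /\
  (forall s t c, R s t -> R (mul s c) (mul t c)).

Definition gen_rcong (X : S -> S -> Prop) (s t : S) : Prop :=
  forall R, right_congruence R -> (forall p q, X p q -> R p q) -> R s t.

Definition rel_eq (R1 R2 : S -> S -> Prop) : Prop :=
  forall s t, R1 s t <-> R2 s t.

Definition fin_gen (R : S -> S -> Prop) : Prop :=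
  exists l : list (S * S), rel_eq R (gen_rcong (fun p q => In (p, q) l)).

(* S = U S^1 : every s is u or u t with u in U, t in S *)
Definition covers_US1 (U : S -> Prop) : Prop :=
  forall s, exists u, U u /\ (s = u \/ exists t, s = mul u t).

End Semigroup.

(* Main.v *)
Require Import Defs.
From Stdlib Require Import List.

Section Aux.
Variable S : Type.
Variable mul : S -> S -> S.
Hypothesis Hassoc : associative_op mul.

Lemma gen_mono (X Y : S -> S -> Prop) :
  (forall p q, X p q -> Y p q) -> forall s t, gen_rcong mul X s t -> gen_rcong mul Y s t.
Proof. intros H s t G R HR HY. apply G; auto. Qed.

Lemma rann_rc a : right_congruence mul (rann mul a).
Proof.
  unfold rann; repeat split.
  - intros s t H; auto.
  - intros s t u H1 H2; congruence.
  - intros s t c H. rewrite !Hassoc, H. reflexivity.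
Qed.

Lemma part1 a b (Hb : a = mul (mul a b) a) (U : S -> Prop) :
  covers_US1 mul U ->
  rel_eq (rann mul a)
    (gen_rcong mul (fun p q => exists u, U u /\ p = mul (mul b a) u /\ q = u)).
Proof.
  intros HU s t. split.
  - intros Hst R [Rr [Rs [Rt Rc]]] HX.
    assert (K : forall x, R x (mul (mul b a) x)).
    { intros x. destruct (HU x) as [u [Uu [-> | [c ->]]]].
      + apply Rs, HX. eauto.
      + assert (H1 : R (mul (mul (mul b a) u) c) (mul u c)) by (apply Rc, HX; eauto).
        rewrite <- Hassoc in H1. apply Rs, H1. }
    apply Rt with (mul (mul b a) s); auto.
    assert (E : mul (mul b a) s = mul (mul b a) t).
    { rewrite <- !Hassoc. unfold rann in Hst. rewrite Hst. reflexivity. }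
    rewrite E. apply Rs, K.
  - intros G. apply G. apply rann_rc.
    intros p q [u [_ [-> ->]]]. unfold rann.
    rewrite !Hassoc. rewrite <- Hb. reflexivity.
Qed.
End Aux.

Theorem mainTheorem12 (S : Type) (mul : S -> S -> S)
  (Hassoc : associative_op mul) (a b : S)
  (Hreg : regular mul a) (Hb : a = mul (mul a b) a) :
  (forall U : S -> Prop, covers_US1 mul U ->
     rel_eq (rann mul a)
       (gen_rcong mul (fun p q => exists u, U u /\ p = mul (mul b a) u /\ q = u)))
  /\
  (fin_gen mul (rann mul a) <->
     exists l : list S, covers_US1 mul (fun u => In u l)).
Proof.
  split; [intros; apply part1; auto|].
  split.
  - intros [l Hl].
    set (comps := b :: flat_map (fun pq => fst pq :: snd pq :: nil) l).
    exists comps.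
    set (M := fun x => exists u, In u comps /\ (x = u \/ exists t, x = mul u t)).
    intros s.
    assert (Hs : rann mul a s (mul (mul b a) s)).
    { unfold rann. rewrite !Hassoc. rewrite <- Hb. reflexivity. }
    apply Hl in Hs.
    assert (HR : right_congruence mul (fun x y => x = y \/ (M x /\ M y))).
    { repeat split.
      - auto.
      - intros x y [->|[]]; auto.
      - intros x y z [->|[]] [->|[]]; auto.
      - intros x y c [->|[[u [Hu Hx]] [v [Hv Hy]]]]; auto. right. split.
        + exists u. split; auto. right. destruct Hx as [->|[t ->]].
          * eauto.
          * exists (mul t c). rewrite Hassoc. reflexivity.
        + exists v. split; auto. right. destruct Hy as [->|[t ->]].
          * eauto.
          * exists (mul t c). rewrite Hassoc. reflexivity. }
    specialize (Hs _ HR).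
    assert (HX : forall p q, In (p, q) l -> p = q \/ (M p /\ M q)).
    { intros p q Hpq. right. split.
      * exists p. split; auto. right. apply in_flat_map. exists (p, q); simpl; auto.
      * exists q. split; auto. right. apply in_flat_map. exists (p, q); simpl; auto. }
    specialize (Hs HX).
    destruct Hs as [E|[Ms _]].
    + exists b. split; [left; reflexivity|]. right. exists (mul a s).
      rewrite Hassoc. exact E.
    + exact Ms.
  - intros [l Hl]. exists (map (fun u => (mul (mul b a) u, u)) l).
    intros s t. rewrite (@part1 S mul Hassoc a b Hb _ Hl s t).
    split; apply gen_mono.
    + intros p q [u [Hu [-> ->]]]. apply in_map_iff. exists u; auto.
    + intros p q Hin. apply in_map_iff in Hin. destruct Hin as [u [E Hu]].
      inversion E; subst. eauto.
Qed.
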